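(* Let $\mathcal{X}\subseteq\mathbb{R}^d$ and let $\mathcal{M}$ be a mechanism on weighted data sets admitting a weighted distinguishability profile $\epsilon\colon[1,\infty)\times\mathcal{X}\to\mathbb{R}_{\ge0}$ that is differentiable in $w$, with $\epsilon'(w,\mathbf{x})=\partial\epsilon(w,\mathbf{x})/\partial w$. Let $\widetilde{\mathcal{M}}(\{\mathbf{x}_i\}_{i=1}^n)=\mathcal{M}(\{(1,\mathbf{x}_i)\}_{i=1}^n)$ be its unweighted counterpart and $\tilde\epsilon(\mathbf{x})=\epsilon(1,\mathbf{x})$. Then there is a Poisson importance sampler $S$ such that the following holds, where $\psi$ denotes the distinguishability profile of $\mathcal{M}\circ S$ given by $\psi(\mathbf{x})=\log\big(1+q(\mathbf{x})(e^{\epsilon(1/q(\mathbf{x}),\mathbf{x})}-1)\big)$ with $q$ the selection-probability function of $S$: for any $\mathbf{x}\in\mathcal{X}$, if $\epsilon'(1,\mathbf{x})<1-e^{-\epsilon(1,\mathbf{x})}$, then $\psi(\mathbf{x})<\tilde\epsilon(\mathbf{x})$.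
   Context: A weighted data set is a finite set $\{(w_i,\mathbf{x}_i)\}$ with $w_i\ge1$, $\mathbf{x}_i\in\mathcal{X}$. Distributions $P,Q$ are $\epsilon$-indistinguishable if $P(Y)\le e^\epsilon Q(Y)$ and $Q(Y)\le e^\epsilon P(Y)$ for all measurable $Y$. A weighted distinguishability profile of $\mathcal{M}$ is a function $\epsilon\colon[1,\infty)\times\mathcal{X}\to\mathbb{R}_{\ge0}$ such that for every weighted data set $\mathcal{S}$ and every $(w',\mathbf{x}')$, $\mathcal{M}(\mathcal{S})$ and $\mathcal{M}(\mathcal{S}\cup\{(w',\mathbf{x}')\})$ are $\epsilon(w',\mathbf{x}')$-indistinguishable. A Poisson importance sampler for a function $q\colon\mathcal{X}\to(0,1]$ maps $\mathcal{D}=\{\mathbf{x}_1,\dots,\mathbf{x}_n\}$ to $\{(1/q(\mathbf{x}_i),\mathbf{x}_i)\mid\gamma_i=1\}$ with $\gamma_i$ independent Bernoulli$(q(\mathbf{x}_i))$. A distinguishability profile $\psi$ of an unweighted mechanism $\mathcal{A}$ means $\mathcal{A}(\mathcal{D})$ and $\mathcal{A}(\mathcal{D}\cup\{\mathbf{x}\})$ are $\psi(\mathbf{x})$-indistinguishable for all data sets $\mathcal{D}$ and points $\mathbf{x}$; it is known that the stated $\psi$ is such a profile of $\mathcal{M}\circ S$. *)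

(* Defs.v *)
From HB Require Import structures.
From mathcomp Require Import all_boot all_order all_algebra.
From mathcomp Require Import finmap.
From mathcomp Require Import all_classical all_reals all_analysis.
Set Implicit Arguments. Unset Strict Implicit. Unset Printing Implicit Defensive.
Import Order.TTheory GRing.Theory Num.Theory.
Local Open Scope ring_scope.

Definition wdataset (R : realType) (d : nat) := {fset (R * 'rV[R]_d)}.

Definition valid_wds (R : realType) (d : nat) (Xs : set 'rV[R]_d)
  (S : wdataset R d) : Prop :=
  forall p, p \in S -> 1 <= p.1 /\ Xs p.2.

Definition indist (R : realType) (dT : measure_display) (T : measurableType dT)
  (P Q : probability T R) (e : R) : Prop :=
  forall Y : set T, measurable Y ->
    (P Y <= (expR e)%:E * Q Y)%E /\ (Q Y <= (expR e)%:E * P Y)%E.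

Definition weighted_profile (R : realType) (d : nat) (Xs : set 'rV[R]_d)
  (dT : measure_display) (T : measurableType dT)
  (M : wdataset R d -> probability T R) (eps : R -> 'rV[R]_d -> R) : Prop :=
  (forall w x, 1 <= w -> Xs x -> 0 <= eps w x) /\
  forall S : wdataset R d, valid_wds Xs S ->
  forall w' x', 1 <= w' -> Xs x' ->
    indist (M S) (M (S `|` [fset (w', x')])%fset) (eps w' x').

Definition unweighted (R : realType) (d : nat) (dT : measure_display)
  (T : measurableType dT) (M : wdataset R d -> probability T R)
  (D : {fset 'rV[R]_d}) : probability T R :=
  M [fset ((1 : R), x) | x in D]%fset.

Definition eps_tilde (R : realType) (d : nat) (eps : R -> 'rV[R]_d -> R)
  (x : 'rV[R]_d) : R := eps 1 x.

(* profile of M o S for the Poisson importance sampler with selection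
   probability q *)
Definition psi (R : realType) (d : nat) (eps : R -> 'rV[R]_d -> R)
  (q : 'rV[R]_d -> R) (x : 'rV[R]_d) : R :=
  ln (1 + q x * (expR (eps (q x)^-1 x) - 1)).

(* Main.v *)
Require Import Defs.
From HB Require Import structures.
From mathcomp Require Import all_boot all_order all_algebra.
From mathcomp Require Import finmap.
From mathcomp Require Import all_classical all_reals all_analysis.
From mathcomp Require Import lra.
Import Order.TTheory GRing.Theory Num.Theory.
Import numFieldNormedType.Exports.
Local Open Scope classical_set_scope.
Local Open Scope ring_scope.

Lemma key (R : realType) (f : R -> R) (l : R) :
  (fun h : R => h^-1 * (f (1 + h) - f 1)) @ (0 : R)^'+ --> l ->
  l < 1 - expR (- f 1) ->
  exists h : R, 0 < h /\ ln (1 + (1 + h)^-1 * (expR (f (1 + h)) - 1)) < f 1.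
Proof.
move=> hl hlt.
set a := f 1 in hlt *.
set b := 1 - expR (- a) in hlt.
set c := (l + b) / 2.
have lc : l < c by rewrite /c; lra.
have cb : c < b by rewrite /c; lra.
set r := Num.min (1 / (`|c| + 1)) ((b - c) / (`|b * c| + 1)).
have r0 : 0 < r.
  rewrite /r lt_min; apply/andP; split; apply: divr_gt0 => //; try lra;
  have := normr_ge0 c; have := normr_ge0 (b * c); lra.
have H1 : \forall t \near (0:R)^'+, t^-1 * (f (1 + t) - a) < c by exact: (cvgr_lt _ hl _ lc).
have H2 := nbhs_right_gt (0 : R).
have H3 := nbhs_right_lt r0.
have [h [[Hh1 Hh2] Hh3]] := filter_ex (filterI (filterI H1 H2) H3).
exists h; split => //.
have hr1 : h < 1 / (`|c| + 1) by apply: (lt_le_trans Hh3); rewrite /r ge_min lexx.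
have hr2 : h < (b - c) / (`|b * c| + 1)
  by apply: (lt_le_trans Hh3); rewrite /r ge_min lexx orbT.
have hc1 : h * c < 1.
  have nc := normr_ge0 c.
  rewrite ltr_pdivlMr in hr1; last lra.
  have : c <= `|c| := ler_norm c.
  nra.
have hbc : h * (b * c) < b - c.
  have nc := normr_ge0 (b * c).
  rewrite ltr_pdivlMr in hr2; last lra.
  have : b * c <= `|b * c| := ler_norm (b * c).
  nra.
have hf : f (1 + h) < a + h * c.
  have : h * (h^-1 * (f (1 + h) - a)) < h * c by rewrite ltr_pM2l.
  rewrite mulrA mulfV ?mul1r; first lra.
  by rewrite gt_eqF.
set E := expR (f (1 + h)).
set u := expR (h * c).
have Epos : 0 < E := expR_gt0 _.
have upos : 0 < u := expR_gt0 _.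
have EU : E < expR a * u by rewrite /E /u -expRD ltr_expR.
have u1 : u * (1 - h * c) <= 1.
  have := expR_ge1Dx (- (h * c)).
  rewrite expRN -/u => H.
  have : u * (1 + - (h * c)) <= u * u^-1 by rewrite ler_pM2l.
  by rewrite mulfV ?gt_eqF.
have ub : u < 1 + h * b.
  have : 1 < (1 + h * b) * (1 - h * c) by nra.
  nra.
have ea : expR a * b = expR a - 1.
  by rewrite /b mulrBr mulr1 expRN mulfV ?gt_eqF ?expR_gt0.
have eapos : 0 < expR a := expR_gt0 a.
have Elt : E < (1 + h) * expR a - h by nra.
set k := (1 + h)^-1.
have hk : k * (1 + h) = 1 by rewrite /k mulVf //; apply: lt0r_neq0; lra.
have kpos : 0 < k by rewrite /k invr_gt0; lra.
have Xpos : 0 < 1 + k * (E - 1) by nra.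
have Xlt : 1 + k * (E - 1) < expR a by nra.
rewrite -[X in _ < X](expRK a).
by rewrite ltr_ln // posrE.
Qed.

Theorem proposition2 (R : realType) (d : nat) (Xs : set 'rV[R]_d)
  (dT : measure_display) (T : measurableType dT)
  (M : wdataset R d -> probability T R)
  (eps eps' : R -> 'rV[R]_d -> R) :
  weighted_profile Xs M eps ->
  (* eps is differentiable in w on [1, oo) with derivative eps'
     (one-sided from the right at the endpoint w = 1) *)
  (forall x, Xs x -> forall w, 1 < w ->
     (fun h : R => h^-1 * (eps (w + h) x - eps w x)) @ (0 : R)^' --> eps' w x) ->
  (forall x, Xs x ->
     (fun h : R => h^-1 * (eps (1 + h) x - eps 1 x)) @ (0 : R)^'+ --> eps' 1 x) ->
  exists q : 'rV[R]_d -> R,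
    (forall x, Xs x -> 0 < q x <= 1) /\
    forall x, Xs x ->
      eps' 1 x < 1 - expR (- eps 1 x) ->
      psi eps q x < eps_tilde eps x.
Proof.
move=> _ _ hr.
pose P x := [set h : R | 0 < h /\
  ln (1 + (1 + h)^-1 * (expR (eps (1 + h) x) - 1)) < eps 1 x].
exists (fun x => (1 + xget 0 (P x))^-1); split.
  move=> x _.
  have h0 : 0 <= xget 0 (P x).
    have [[y Py]|N] := pselect (exists y, P x y).
      by have [] := xgetPex 0 (ex_intro _ y Py) => /ltW.
    by rewrite xgetPN //; move=> y Py; apply: N; exists y.
  apply/andP; split; first by rewrite invr_gt0; lra.
  by rewrite invf_le1; lra.
move=> x Xx hlt.
have [h [h0 hh]] := @key R (fun w => eps w x) _ (hr x Xx) hlt.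
have [_ H] := xgetPex 0 (ex_intro (P x) h (conj h0 hh)).
by rewrite /psi /eps_tilde invrK.
Qed.
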